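(* Let $2\le n<d$ with $n=2$ or $n$ odd, and let $t$ be as defined below. Then there exists $E\in\mathrm{SL}(d,q)$ such that $T:=E^{-1}tE$ is a weak doubling element.
   Context: Vectors are row vectors and matrices act from the right; $\mathrm{Fix}(g)=\{x\in\mathbb{F}_q^d: xg=x\}$. $e_1,\dots,e_d$ is the standard basis of $V=\mathbb{F}_q^d$, $V_n=\langle e_1,\dots,e_n\rangle$, $F_{d-n}=\langle e_{n+1},\dots,e_d\rangle$, and $n'=\min\{2n-1,d\}$. An element $c\in\mathrm{GL}(d,q)$ is a weak doubling element if (C1) $\dim(V_n+V_nc)=n'$ and (C2) if $n'<d$ then $\dim(F_{d-n}+\mathrm{Fix}(c))=d$. $E_{i,j}(\lambda)$ is the identity matrix with $(i,j)$ entry replaced by $\lambda$ ($i\ne j$). Here $q=p^f$. The element $t$ is: $E_{1,2}(1)$ if $n=2$; $\operatorname{diag}(z_1,I_{d-n})$ if $n>2$ and $p=2$; $\operatorname{diag}(z_2,I_{d-n})$ if $n>2$ and $p$ odd, where ($P_\sigma$ being the $n\times n$ matrix with $e_iP_\sigma=e_{\sigma(i)}$) $z_1=P_{(1,n,n-1,\dots,2)}$ with $(1,n)$ entry changed to $-1$ if $n$ is even, and $z_2=P_{(2,n,n-1,\dots,3)}$ with $(2,n)$ entry changed to $-1$ if $n$ is odd. *)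

(* Defs.v *)
From HB Require Import structures.
From mathcomp Require Import all_boot all_order all_algebra all_field.
Set Implicit Arguments. Unset Strict Implicit. Unset Printing Implicit Defensive.
Import GRing.Theory.
Local Open Scope ring_scope.

(* Indices are 0-based: the paper's e_k is row index k-1.
   Subspaces of F^d are represented (mxalgebra) by row spaces of matrices;
   vectors are rows, matrices act on the right. *)

(* V_n = <e_1..e_n> is the row space of pid_mx n; F_{d-n} = <e_{n+1}..e_d>
   is the row space of copid_mx n; Fix(c) = {x | x c = x} is kermx (c - 1). *)

Definition nprime (d n : nat) : nat := minn (2 * n - 1) d.

Definition weak_doubling (F : fieldType) (d n : nat) (c : 'M[F]_d) : Prop :=
  \rank ((pid_mx n : 'M[F]_d) + (pid_mx n : 'M[F]_d) *m c)%MS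
               = nprime d n /\
  ((nprime d n < d)%N ->
             \rank ((copid_mx n : 'M[F]_d) + kermx (c - 1%:M))%MS = d).

(* z_1 = P_sigma, sigma = (1,n,n-1,...,2) (1-based): sigma(1)=n, sigma(k)=k-1.
   0-based: 0 |-> n-1, k |-> k-1. Row i has its 1 in column sigma(i). *)
Definition zsig1 (n i : nat) : nat := if i == 0%N then n.-1 else i.-1.
(* z_2 = P_sigma, sigma = (2,n,n-1,...,3): sigma(1)=1, sigma(2)=n, sigma(k)=k-1.
   0-based: 0 |-> 0, 1 |-> n-1, k |-> k-1 (k >= 2). *)
Definition zsig2 (n i : nat) : nat :=
  if i == 0%N then 0%N else if i == 1%N then n.-1 else i.-1.

Definition z1_entry (F : fieldType) (n i j : nat) : F :=
  if j == zsig1 n i then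
    (if [&& i == 0%N, j == n.-1 & ~~ odd n] then -1 else 1)
  else 0.
Definition z2_entry (F : fieldType) (n i j : nat) : F :=
  if j == zsig2 n i then
    (if [&& i == 1%N, j == n.-1 & odd n] then -1 else 1)
  else 0.

Definition t_entry (F : fieldType) (n i j : nat) : F :=
  if n == 2%N then
    (if (i == 0%N) && (j == 1%N) then 1 else (i == j)%:R)
  else if (i < n)%N && (j < n)%N then
    (if 2%N \in [pchar F] then z1_entry F n i j else z2_entry F n i j)
  else (i == j)%:R.

Definition tmx (F : fieldType) (d n : nat) : 'M[F]_d :=
  \matrix_(i < d, j < d) t_entry F n i j.

(* Main.v *)
Require Import Defs.
From HB Require Import structures.
From mathcomp Require Import all_boot all_order all_algebra all_field.
From mathcomp Require Import zify.
Set Implicit Arguments. Unset Strict Implicit. Unset Printing Implicit Defensive.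
Import GRing.Theory.
Local Open Scope ring_scope.

Section Gen.
Variable F : fieldType.

Lemma lunip n m (A : 'M[F]_(m, n)) :
  block_mx 1%:M 0 A 1%:M *m block_mx 1%:M 0 (- A) 1%:M = 1%:M :> 'M_(n + m).
Proof.
by rewrite mulmx_block !(mul0mx, mulmx0, mul1mx, mulmx1, addr0, add0r) ?subrr ?addNr -scalar_mx_block.
Qed.

Lemma uunip n m (A : 'M[F]_(n, m)) :
  block_mx 1%:M A 0 1%:M *m block_mx 1%:M (- A) 0 1%:M = 1%:M :> 'M_(n + m).
Proof.
by rewrite mulmx_block !(mul0mx, mulmx0, mul1mx, mulmx1, addr0, add0r) ?subrr ?addNr -scalar_mx_block.
Qed.


Lemma gen n m (z : 'M[F]_n) : (0 < n)%N -> (0 < m)%N -> \rank (z - 1%:M) = n.-1 ->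
  exists E : 'M[F]_(n+m), \det E = 1 /\
    weak_doubling n (invmx E *m block_mx z 0 0 1%:M *m E).
Proof.
move=> n0 m0 rN.
set N := z - 1%:M.
set phi : 'M[F]_(n,m) := invmx (row_ebase N) *m pid_mx m.
set psi : 'M[F]_(m,n) := pid_mx n.
set Ua := block_mx 1%:M (- phi) 0 1%:M : 'M[F]_(n+m).
set La := block_mx 1%:M 0 (- psi) 1%:M : 'M[F]_(n+m).
set Lb := block_mx 1%:M 0 psi 1%:M : 'M[F]_(n+m).
set Ub := block_mx 1%:M phi 0 1%:M : 'M[F]_(n+m).
have LaLb : La *m Lb = 1%:M by have := lunip (- psi); rewrite opprK.
have UaUb : Ua *m Ub = 1%:M by have := uunip (- phi); rewrite opprK.
exists (Ua *m La).
have dE : \det (Ua *m La) = 1 by rewrite det_mulmx det_ublock det_lblock !det1 !mulr1.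
have uE : Ua *m La \in unitmx by rewrite unitmxE dE unitr1.
have EE' : (Ua *m La) *m (Lb *m Ub) = 1%:M.
  by rewrite mulmxA -(mulmxA Ua) LaLb mulmx1 UaUb.
have uE' : Lb *m Ub \in unitmx by case: (mulmx1_unit EE').
have iE : invmx (Ua *m La) = Lb *m Ub.
  by rewrite -[LHS]mulmx1 -EE' mulKmx.
have EE2 : forall X : 'M[F]_(n+m), X *m Ua *m La *m Lb *m Ub = X.
  by move=> X; rewrite -!mulmxA (mulmxA La) LaLb mul1mx UaUb mulmx1.
split => //; rewrite iE.
set t := block_mx z 0 0 1%:M.
set E := Ua *m La. set E' := Lb *m Ub.
have PE : (pid_mx n : 'M[F]_(n+m)) *m E' = block_mx 1%:M phi 0 0.
  rewrite (@pid_mx_block _ m m n) /E' /Lb /Ub !mulmx_block.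
  by rewrite !(mul0mx, mulmx0, mul1mx, mulmx1, addr0, add0r).
split.
- rewrite addsmxE -(mxrankMfree _ (_ : row_free E')); last by rewrite row_free_unit.
  rewrite mul_col_mx.
  have -> : (pid_mx n : 'M[F]_(n+m)) *m (E' *m t *m E) *m E' = pid_mx n *m E' *m t.
    by rewrite /E /E' !mulmxA EE2.
  rewrite PE.
  set X := block_mx 1%:M phi 0 0 : 'M[F]_(n+m).
  set B := N *m phi.
  set W := block_mx 0 (- B) 0 0 : 'M[F]_(n+m).
  set Nh := block_mx N 0 0 0 : 'M[F]_(n+m).
  set L0 := block_mx 1%:M 0 (1%:M + Nh) 1%:M : 'M[F]_((n+m)+(n+m)).
  have -> : col_mx X (X *m t) = L0 *m col_mx X W.
    rewrite [RHS]mul_block_col !(mul1mx, mul0mx, addr0, add0r); congr (col_mx _ _).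
    rewrite mulmxDl mul1mx /Nh /X /W /t !mulmx_block !(mul1mx, mul0mx, mulmx0, mulmx1, addr0, add0r).
    rewrite !add_block_mx !(addr0, add0r) /B /N.
    by rewrite mulmxBl mul1mx addrK addrC subrK.
  have fL0 : row_full L0.
    by rewrite row_full_unit unitmxE det_lblock !det1 mulr1 unitr1.
  rewrite eqmxMfull //.
  set P0 := block_mx 1%:M 0 0 0 : 'M[F]_(n+m).
  have -> : col_mx X W = col_mx P0 W *m Ub.
    rewrite mul_col_mx /P0 /W /Ub !mulmx_block !(mul1mx, mul0mx, mulmx0, mulmx1, addr0, add0r).
    by [].
  have uUb : Ub \in unitmx by case: (mulmx1_unit UaUb).
  rewrite mxrankMfree ?row_free_unit //.
  rewrite -addsmxE mxrank_disjoint_sum; last first.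
    apply/eqP; rewrite -submx0; apply/rV_subP => v.
    rewrite sub_capmx => /andP[/submxP[a ->] /submxP[b Hb]].
    have P0P0 : P0 *m P0 = P0.
      by rewrite /P0 mulmx_block !(mul1mx, mul0mx, mulmx0, mulmx1, addr0, add0r).
    have WP0 : W *m P0 = 0.
      by rewrite /P0 /W mulmx_block !(mul1mx, mul0mx, mulmx0, mulmx1, addr0, add0r) block_mx0.
    by rewrite -P0P0 mulmxA Hb -mulmxA WP0 mulmx0 sub0mx.
  rewrite /P0 rank_diag_block_mx mxrank1 mxrank0 addn0.
  rewrite /W block_mxEv row_mx0 rank_col_mx0 rank_row_0mx eqmx_opp.
  rewrite /B /phi mulmxA -[X in X *m invmx _]mulmx_ebase mulmxK ?row_ebase_unit //.
  rewrite -mulmxA mul_pid_mx eqmxMfull ?row_full_unit ?col_ebase_unit //.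
  rewrite (@rank_pid_mx F n m); last 2 first.
  - lia.
  - lia.
  rewrite rN /nprime; lia.
- move=> Hlt.
  have nm : (n <= m)%N by move: Hlt; rewrite /nprime; lia.
  have Cb : copid_mx n = block_mx 0 0 0 1%:M :> 'M[F]_(n+m).
    rewrite /copid_mx (@pid_mx_block _ m m n) (@scalar_mx_block _ n m) opp_block_mx add_block_mx.
    by rewrite subrr !oppr0 !addr0.
  set S := (copid_mx n + kermx (E' *m t *m E - 1%:M))%MS.
  suff H1 : (1%:M <= S)%MS by move: H1; rewrite sub1mx => /eqP.
  have eq1 : pid_mx n + copid_mx n = 1%:M :> 'M[F]_(n+m) by rewrite /copid_mx addrC subrK.
  rewrite -[X in (X <= _)%MS]eq1; apply: addmx_sub; last exact: addsmxSl.
  set K := copid_mx n *m E.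
  have CE : K = block_mx 0 0 (- psi) 1%:M.
    by rewrite /K /E Cb /Ua /La !mulmx_block !(mul1mx, mul0mx, mulmx0, mulmx1, addr0, add0r).
  have ct : copid_mx n *m t = copid_mx n.
    by rewrite Cb /t !mulmx_block !(mul1mx, mul0mx, mulmx0, mulmx1, addr0, add0r).
  have Kk : (K <= kermx (E' *m t *m E - 1%:M))%MS.
    apply/sub_kermxP; rewrite mulmxBr mulmx1 /K /E' /E !mulmxA EE2.
    by rewrite ct subrr.
  have KS : (copid_mx n - K <= S)%MS.
    apply: addmx_sub; first exact: addsmxSl.
    by rewrite eqmx_opp; apply: submx_trans Kk _; exact: addsmxSr.
  apply: submx_trans KS.
  rewrite Cb CE opp_block_mx add_block_mx !subrr opprK add0r.
  apply/submxP; exists (block_mx 0 psi^T 0 0).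
  rewrite mulmx_block !(mul1mx, mul0mx, mulmx0, mulmx1, addr0, add0r).
  rewrite /psi tr_pid_mx (@mul_pid_mx F n m n n n) minnn (minn_idPr nm).
  by rewrite pid_mx_1 (@pid_mx_block _ m m n).
Qed.
End Gen.
Lemma tmx_block (F : fieldType) n m : (2 <= n)%N ->
  tmx F (n+m) n = block_mx (\matrix_(i<n, j<n) t_entry F n i j) 0 0 1%:M.
Proof.
move=> Hn.
rewrite -[tmx _ _ _]submxK; congr block_mx; apply/matrixP => i j; rewrite !mxE /=; move: (ltn_ord i) (ltn_ord j) => Hi Hj.
- done.
- rewrite /t_entry.
  have h1 : (i == n + j :> nat) = false by apply/eqP; lia.
  have h2 : (n + j == 1)%N = false by apply/eqP; lia.
  have h3 : (n + j < n)%N = false by lia.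
  by rewrite h1 h2 h3 andbF !andbF; case: ifP.
- rewrite /t_entry.
  have h1 : (n + i == j :> nat) = false by apply/eqP; lia.
  have h2 : (n + i == 0)%N = false by apply/eqP; lia.
  have h3 : (n + i < n)%N = false by lia.
  by rewrite h1 h2 h3 /=; case: ifP.
- rewrite /t_entry.
  have h2 : (n + i == 0)%N = false by apply/eqP; lia.
  have h3 : (n + i < n)%N = false by lia.
  rewrite h2 h3 /= eqn_add2l.
  by case: ifP.
Qed.
Lemma mono_mul (F : fieldType) n0 (f : nat -> nat -> F) (s : nat -> nat)
    (u : 'rV[F]_n0.+1) k :
  (k < n0.+1)%N -> (s k < n0.+1)%N ->
  (forall i, (i < n0.+1)%N -> s i = s k -> i = k) ->
  (forall i j, j != s i -> f i j = 0) ->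
  (u *m \matrix_(i < n0.+1, j < n0.+1) f i j) 0 (inord (s k)) =
    u 0 (inord k) * f k (s k).
Proof.
move=> Hk Hsk inj hf.
rewrite mxE (bigD1 (inord k)) //= big1 ?addr0.
  by rewrite !mxE !inordK.
move=> i /eqP Hik; rewrite !mxE inordK // hf ?mulr0 //.
apply/eqP => E; apply: Hik; apply: val_inj => /=; rewrite inordK //.
exact: inj i (ltn_ord i) (esym E).
Qed.

Lemma rank_from_ker (F : fieldType) n (A : 'M[F]_n) (v : 'rV_n) :
  v != 0 -> v *m A = 0 -> (forall u : 'rV_n, u *m A = 0 -> (u <= v)%MS) ->
  \rank A = n.-1.
Proof.
move=> v0 vA H.
have k1 : \rank (kermx A) = 1%N.
  apply/eqP; rewrite eqn_leq; apply/andP; split.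
    have : (kermx A <= v)%MS.
      by apply/row_subP => i; apply: H; rewrite -row_mul mulmx_ker row0.
    by move/mxrankS; rewrite rank_rV v0.
  have : (v <= kermx A)%MS by apply/sub_kermxP.
  by move/mxrankS; rewrite rank_rV v0.
move: k1; rewrite mxrank_ker; have := rank_leq_row A; lia.
Qed.

Lemma rank_z2 (F : fieldType) n0 : (2 <= n0)%N -> odd n0.+1 ->
  (2 \notin [pchar F])%N ->
  \rank (\matrix_(i < n0.+1, j < n0.+1) t_entry F n0.+1 i j - 1%:M) = n0.
Proof.
move=> Hn0 Hodd Hch.
set n := n0.+1.
have two : (2%:R : F) != 0.
  by move: (Hch); rewrite inE /=.
have ez : \matrix_(i < n, j < n) t_entry F n i j = \matrix_(i < n, j < n) z2_entry F n i j.
  apply/matrixP => i j; rewrite !mxE /t_entry.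
  have -> : (n == 2)%N = false by apply/eqP; lia.
  by rewrite !ltn_ord /= (negbTE Hch).
rewrite ez; set Z := \matrix_(i < n, j < n) z2_entry F n i j.
apply: (@rank_from_ker _ _ _ (delta_mx 0 0)).
- apply/eqP => /matrixP /(_ 0 0); rewrite !mxE eqxx /=; apply/eqP; exact: oner_neq0.
- rewrite mulmxBr mulmx1 -rowE; apply/eqP; rewrite subr_eq0; apply/eqP/matrixP => i j.
  rewrite !mxE /z2_entry /zsig2 /=.
  by rewrite (ord1 i); case: j => [[|j'] Hj].
move=> u Hu.
have Hz : u *m Z = u by move: Hu; rewrite mulmxBr mulmx1 => /eqP; rewrite subr_eq0 => /eqP.
pose uu k := u 0 (inord k).
have key : forall k, (k < n)%N -> uu (zsig2 n k) = uu k * z2_entry F n k (zsig2 n k).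
  move=> k Hk; rewrite /uu -[in LHS]Hz; apply: mono_mul => //.
  - rewrite /zsig2; case: ifP => _; first lia; case: ifP => _; lia.
  - move=> i Hi; rewrite /zsig2.
    case: ifP => /eqP H1; case: ifP => /eqP H2; try case: ifP => /eqP H3;
      try case: ifP => /eqP H4; lia.
  - by move=> i j /negbTE; rewrite /z2_entry => ->.
have rel1 : uu n0 = - uu 1.
  have := key 1%N (ltac:(lia)); rewrite /z2_entry /zsig2 /= eqxx /= (Hodd : ~~ odd n0) /= => ->.
  by rewrite mulrN1.
have relk : forall k, (2 <= k)%N -> (k < n)%N -> uu k.-1 = uu k.
  move=> k H2 Hk; have := key k Hk; rewrite /z2_entry /zsig2.
  have -> : (k == 0)%N = false by apply/eqP; lia.
  have -> : (k == 1)%N = false by apply/eqP; lia.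
  by rewrite eqxx /= mulr1.
have all1 : forall k, (1 <= k)%N -> (k < n)%N -> uu k = uu 1.
  elim => [//|k IH] H1 Hk.
  case: (eqVneq k 0%N) => [->//|k0].
  rewrite -IH; [|lia|lia].
  by rewrite -(relk k.+1) //; lia.
have u1 : uu 1 = 0.
  have : uu 1 + uu 1 = 0.
    by rewrite -[X in X + _](all1 n0) ?rel1 ?addNr //; lia.
  rewrite -mulr2n -mulr_natr => /eqP; rewrite mulf_eq0 (negbTE two) orbF => /eqP //.
apply/sub_rVP; exists (u 0 0); apply/matrixP => i j.
rewrite !mxE (ord1 i) eqxx /=.
case: (eqVneq (j : nat) 0%N) => [j0|j0].
  have -> : j = 0 by apply: val_inj.
  by rewrite eqxx mulr1.
have : u 0 j = uu j by rewrite /uu inord_val.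
rewrite all1 ?u1; [|lia|exact: ltn_ord] => ->.
have -> : (j == 0) = false by apply/eqP => E; rewrite E in j0.
by rewrite mulr0.
Qed.

Lemma rank_z1 (F : fieldType) n0 : (2 <= n0)%N -> odd n0.+1 ->
  (2 \in [pchar F])%N ->
  \rank (\matrix_(i < n0.+1, j < n0.+1) t_entry F n0.+1 i j - 1%:M) = n0.
Proof.
move=> Hn0 Hodd Hch.
set n := n0.+1.
have ez : \matrix_(i < n, j < n) t_entry F n i j = \matrix_(i < n, j < n) z1_entry F n i j.
  apply/matrixP => i j; rewrite !mxE /t_entry.
  have -> : (n == 2)%N = false by apply/eqP; lia.
  by rewrite !ltn_ord /= Hch.
rewrite ez; set Z := \matrix_(i < n, j < n) z1_entry F n i j.
have sinj : forall k i, (i < n)%N -> (k < n)%N -> zsig1 n i = zsig1 n k -> i = k.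
  move=> k i Hi Hk; rewrite /zsig1.
  case: ifP => /eqP H1; case: ifP => /eqP H2; lia.
have sb : forall k, (k < n)%N -> (zsig1 n k < n)%N.
  by move=> k Hk; rewrite /zsig1; case: ifP => _; lia.
have fz : forall i j, j != zsig1 n i -> z1_entry F n i j = 0.
  by move=> i j /negbTE; rewrite /z1_entry => ->.
have f1 : forall k, z1_entry F n k (zsig1 n k) = 1.
  by move=> k; rewrite /z1_entry eqxx; case: ifP => // /and3P[_ _]; rewrite Hodd.
have key : forall (u : 'rV[F]_n) k, (k < n)%N ->
    (u *m Z) 0 (inord (zsig1 n k)) = u 0 (inord k).
  move=> u k Hk; rewrite mono_mul ?f1 ?mulr1 //; [exact: sb|].
  by move=> i Hi; apply: sinj.
have surj : forall j : 'I_n, exists2 k, (k < n)%N & j = inord (zsig1 n k).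
  move=> j; case: (ltnP j.+1 n) => Hj.
    exists j.+1 => //; apply: val_inj; rewrite /= inordK /zsig1 //=.
  exists 0%N => //; apply: val_inj; rewrite /= inordK /zsig1 //=.
    by move: (ltn_ord j) => ?; lia.
apply: (@rank_from_ker _ _ _ (const_mx 1)).
- apply/eqP => /matrixP /(_ 0 0); rewrite !mxE; apply/eqP; exact: oner_neq0.
- rewrite mulmxBr mulmx1; apply/eqP; rewrite subr_eq0; apply/eqP/matrixP => i j.
  rewrite (ord1 i); have [k Hk ->] := surj j.
  by rewrite key // !mxE.
move=> u Hu.
have Hz : u *m Z = u by move: Hu; rewrite mulmxBr mulmx1 => /eqP; rewrite subr_eq0 => /eqP.
pose uu k := u 0 (inord k).
have rel : forall k, (1 <= k)%N -> (k < n)%N -> uu k.-1 = uu k.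
  move=> k H1 Hk; rewrite /uu -(key u k Hk) Hz /zsig1.
  by have -> : (k == 0)%N = false by apply/eqP; lia.
have all0 : forall k, (k < n)%N -> uu k = uu 0.
  elim => [//|k IH] Hk.
  by rewrite -(rel k.+1) //= IH //; lia.
apply/sub_rVP; exists (u 0 0); apply/matrixP => i j.
rewrite !mxE (ord1 i) mulr1.
have : u 0 j = uu j by rewrite /uu inord_val.
rewrite all0 ?ltn_ord // => ->.
by rewrite /uu; congr (u _ _); apply: val_inj; rewrite /= inordK.
Qed.

Lemma rank_n2 (F : fieldType) :
  \rank (\matrix_(i < 2, j < 2) t_entry F 2 i j - 1%:M) = 1%N.
Proof.
have -> : \matrix_(i < 2, j < 2) t_entry F 2 i j - 1%:M = delta_mx 0 1.
  apply/matrixP => i j; rewrite !mxE /t_entry /=.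
  by case: i => [[|[|?]] Hi] //; case: j => [[|[|?]] Hj] //=; rewrite ?subrr ?subr0.
exact: mxrank_delta.
Qed.

Theorem lemma7p7 (F : finFieldType) (d n : nat) :
  (2 <= n)%N -> (n < d)%N -> (n = 2%N \/ odd n) ->
  exists E : 'M[F]_d, \det E = 1 /\
    weak_doubling n (invmx E *m tmx F d n *m E).
Proof.
move=> Hn2 Hnd Hc.
move: (subnKC (ltnW Hnd)); set m := (d - n)%N => Hd.
clearbody m; subst d.
rewrite tmx_block //.
apply: gen; [lia|lia|].
case: Hc => [->|Hodd]; first exact: rank_n2.
clear Hnd; move: Hn2 Hodd; case: n => [//|n0] Hn2 Hodd /=.
have Hn0 : (2 <= n0)%N by move: Hodd Hn2; case: n0 => [|[|n1]].
case: (boolP (2 \in [pchar F])%N) => Hch.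
  exact: rank_z1.
exact: rank_z2.
Qed.
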